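(* Let $G=(V,E)$ be a connected geodetic graph, let $r\in V$, and let $T$ be the shortest-path tree of $G$ rooted at $r$. Suppose $u\neq v$ are vertices on the same level of $T$ with $\{u,v\}\in E$. Then for no vertex $u'$ in the subtree of $T$ rooted at $u$ and no vertex $v'$ in the subtree of $T$ rooted at $v$ with $\{u',v'\}\neq\{u,v\}$ is $\{u',v'\}$ an edge of $G$.
   Context: All graphs are finite, simple and undirected. A geodesic from $u$ to $v$ is a shortest path; $G$ is geodetic if for all $u,v\in V$ there is at most one geodesic from $u$ to $v$. For a connected geodetic graph $G$ and $r\in V$, the shortest-path tree rooted at $r$ is the graph $(V,T)$ where $T\subseteq E$ is the set of all edges lying on some shortest path from $r$ to another vertex; it is a tree. The level of a vertex $w$ is its distance $d(r,w)$ from $r$. Subtrees are taken in the rooted tree $(V,T)$. *)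

(* Defs.v *)
From mathcomp Require Import all_boot.
Set Implicit Arguments. Unset Strict Implicit. Unset Printing Implicit Defensive.

Section Geo.
Variable V : finType.

Definition simple_graph (e : rel V) := symmetric e /\ irreflexive e.

Fixpoint ppath (R : V -> V -> Prop) (x : V) (p : seq V) : Prop :=
  if p is y :: p' then R x y /\ ppath R y p' else True.

(* x :: p is a walk in G from x to last x p, of length size p. *)
Definition walk (e : rel V) x p := ppath (fun a b => e a b) x p.

Definition connected (e : rel V) := forall x y : V, connect e x y.

Definition dist_is (e : rel V) (x y : V) (n : nat) :=
  (exists p, walk e x p /\ last x p = y /\ size p = n) /\
  (forall p, walk e x p -> last x p = y -> n <= size p).

Definition geodesic (e : rel V) (x : V) (p : seq V) :=
  walk e x p /\ forall q, walk e x q -> last x q = last x p -> size p <= size q.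

Definition geodetic (e : rel V) :=
  forall x p q, geodesic e x p -> geodesic e x q -> last x p = last x q -> p = q.

(* {a,b} is an edge of the shortest-path tree rooted at r: an edge of G lying
   on some shortest path from r *)
Definition spt_edge (e : rel V) (r : V) (a b : V) : Prop :=
  e a b /\ exists p, geodesic e r p /\
    exists s1 s2, r :: p = s1 ++ a :: b :: s2 \/ r :: p = s1 ++ b :: a :: s2.

Definition in_subtree (e : rel V) (r u w : V) : Prop :=
  exists p, ppath (spt_edge e r) r p /\ last r p = w /\ uniq (r :: p) /\
            u \in r :: p.

End Geo.

(* Main.v *)
Require Import Defs.
From mathcomp Require Import all_boot.
From Stdlib Require Import Classical.

Set Implicit Arguments. Unset Strict Implicit. Unset Printing Implicit Defensive.

Section Aux.
Variable V : finType.
Variable e : rel V.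

Lemma walkP x p : walk e x p <-> path e x p.
Proof.
elim: p x => [|y p IH] x /=; first by split.
rewrite /walk /= -/(walk e y p) IH.
by split; [case=> -> -> | case/andP=> -> ->].
Qed.

Lemma walk_cat x p1 p2 :
  walk e x (p1 ++ p2) <-> walk e x p1 /\ walk e (last x p1) p2.
Proof. by rewrite !walkP cat_path; split; [move/andP|move=> [-> ->]]. Qed.

Lemma ppath_rcons (R : V -> V -> Prop) x p y :
  ppath R x (rcons p y) <-> ppath R x p /\ R (last x p) y.
Proof.
elim: p x => [|z p IH] x /=; first by split; [case|case].
rewrite IH; tauto.
Qed.

Lemma geo_prefix x p1 p2 : geodesic e x (p1 ++ p2) -> geodesic e x p1.
Proof.
move=> [/walk_cat [w1 w2] H]; split => // q wq lq.
have wq2 : walk e x (q ++ p2) by apply/walk_cat; rewrite lq.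
have := H _ wq2; rewrite !last_cat lq !size_cat leq_add2r; by apply.
Qed.

Lemma split_mem (x u : V) p : u \in x :: p -> exists A B, p = A ++ B /\ last x A = u.
Proof.
rewrite in_cons => /orP [/eqP -> | ].
  by exists [::], p.
case/splitPr => p1 p2; exists (rcons p1 u), p2.
by rewrite cat_rcons last_rcons.
Qed.

Lemma split2 (r : V) g s1 a b s2 : r :: g = s1 ++ a :: b :: s2 ->
  exists g1, g = g1 ++ b :: s2 /\ last r g1 = a.
Proof.
case: s1 => [|c s1] /= [-> ->]; first by exists [::].
by exists (rcons s1 a); rewrite cat_rcons last_rcons.
Qed.

Lemma exists_geo x y : (exists p, walk e x p /\ last x p = y) ->
  exists q, geodesic e x q /\ last x q = y.
Proof.
move=> [p [wp lp]].
move: {2}(size p) (leqnn (size p)) => N; elim: N p wp lp => [|N IH] p wp lp hs.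
  exists p; split => //; split => // q _ _; by rewrite (leq_trans hs).
case: (classic (geodesic e x p)) => [g|ng]; first by exists p.
have [q [wq [lq sq]]] : exists q, walk e x q /\ last x q = y /\ size q < size p.
  apply: NNPP => nq; apply: ng; split => // q wq lq.
  rewrite leqNgt; apply/negP => sq; apply: nq; exists q; by rewrite lq lp.
apply: (IH q wq lq); by rewrite -ltnS (leq_trans sq hs).
Qed.

Hypothesis geo : geodetic e.

Lemma tree_geo r p : ppath (spt_edge e r) r p -> uniq (r :: p) -> geodesic e r p.
Proof.
elim/last_ind: p => [|p x IH].
  move=> _ _; split => // q; by [].
rewrite ppath_rcons -rcons_cons rcons_uniq => -[pp [exa [g [gg [s1 [s2 hs]]]]]].
case/andP => xn un; have gp := IH pp un.
case: hs => /split2 [g1 [dg lg]].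
- have g1x : geodesic e r (rcons g1 x) by apply: (geo_prefix (p2 := s2)); rewrite cat_rcons -dg.
  have g1g : geodesic e r g1 by apply: (geo_prefix (p2 := [:: x])); rewrite cats1.
  by rewrite (geo gp g1g) // lg.
- have g1a : geodesic e r (rcons g1 (last r p)).
    by apply: (geo_prefix (p2 := s2)); rewrite cat_rcons -dg.
  have ep := geo gp g1a; rewrite last_rcons in ep; have := ep erefl => ep'.
  exfalso; move/negP: xn; apply; rewrite ep' -rcons_cons mem_rcons in_cons -lg.
  by rewrite mem_last orbT.
Qed.

Hypothesis sg : simple_graph e.

Lemma core r u v n Au Bu Av Bv u' v' :
  u != v -> e u v -> dist_is e r u n -> dist_is e r v n ->
  geodesic e r (Au ++ Bu) -> last r Au = u -> last u Bu = u' ->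
  geodesic e r (Av ++ Bv) -> last r Av = v -> last v Bv = v' ->
  size Au = n -> size Av = n -> size Bu <= size Bv -> e u' v' ->
  ~ (u' = u /\ v' = v) -> False.
Proof.
move=> nuv euv [[pu [wpu [lpu spu]]] du] [[pv [wpv [lpv spv]]] dv] gu lAu lBu gv lAv lBv sAu sAv sB euv' hn.
have [wAu wBu] : walk e r Au /\ walk e u Bu by rewrite -lAu; apply/walk_cat; case: gu.
have [wAv wBv] : walk e r Av /\ walk e v Bv by rewrite -lAv; apply/walk_cat; case: gv.
have W1 : walk e u (v :: Bv) by split.
have W2 : walk e u (rcons Bu v').
  by rewrite -cats1; apply/walk_cat; split => //; rewrite lBu /walk /=.
have [q [gq lq]] := exists_geo (ex_intro _ _ (conj W1 lBv)).
have sq1 := gq.2 _ W1; rewrite /= lq lBv in sq1; have {sq1} sq1 := sq1 erefl.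
have sq2 := gq.2 _ W2; rewrite last_rcons lq in sq2; have {sq2} sq2 := sq2 erefl.
rewrite size_rcons in sq2.
have wAq : walk e r (Au ++ q) by apply/walk_cat; rewrite lAu; split => //; case: gq.
have lAq : last r (Au ++ q) = last r (Av ++ Bv) by rewrite !last_cat lAu lAv lq.
have := gv.2 _ wAq lAq; rewrite !size_cat sAu sAv leq_add2l => sBq.
case: (ltngtP (size q) (size Bv)) => hq.
- by move: hq; rewrite ltnNge sBq.
- have eq1 : size q = (size Bv).+1 by apply/eqP; rewrite eqn_leq hq andbT; exact: sq1.
  have sBB : size Bu = size Bv by apply/eqP; rewrite eqn_leq sB -ltnS -eq1.
  have g1 : geodesic e u (v :: Bv) by split => // q' wq' lq'; rewrite /= -eq1; apply: gq.2 => //; by rewrite lq' /= lBv lq.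
  have g2 : geodesic e u (rcons Bu v').
    split => // q' wq' lq'; rewrite size_rcons sBB -eq1; apply: gq.2 => //; by rewrite lq' last_rcons lq.
  have := geo g1 g2; rewrite /= last_rcons lBv => /(_ erefl).
  case: Bu gu lBu sBB {wBu W2 sB g2 sq2} => [|b Bu'] gu lBu sBB /=.
    case: Bv lBv sBB {wBv W1 hq sBq eq1 g1 gv sq1 lAq} => [|b Bv'] lBv sBB /=; last by [].
    move=> [e1]; apply: hn; by rewrite -lBu -lBv e1.
  move=> [evb _]; subst b.
  have gA : geodesic e r (rcons Au v).
    by apply: (geo_prefix (p2 := Bu')); rewrite cat_rcons.
  have := gA.2 _ wpv; rewrite last_rcons lpv size_rcons sAu spv ltnn.
  by move/(_ erefl).
- have gAq : geodesic e r (Au ++ q).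
    split => // q' wq' lq'; rewrite size_cat hq sAu -sAv -size_cat; apply: gv.2 => //; by rewrite lq' lAq.
  have := geo gAq gv lAq => /eqP; rewrite eqseq_cat; last by rewrite sAu sAv.
  case/andP => /eqP eA _; move: nuv; by rewrite -lAu -lAv eA eqxx.
Qed.

End Aux.

Theorem lemma5 (V : finType) (e : rel V) (r u v : V) :
  simple_graph e -> connected e -> geodetic e ->
  u != v -> e u v ->
  (exists n, dist_is e r u n /\ dist_is e r v n) ->
  forall u' v' : V,
    in_subtree e r u u' -> in_subtree e r v v' ->
    ~ (u' = u /\ v' = v) -> ~ (u' = v /\ v' = u) ->
    ~~ e u' v'.
Proof.
move=> sg _ geo nuv euv [n [du dv]] u' v' [pu [ppu [lpu [unu mu]]]] [pv [ppv [lpv [unv mv]]]] h1 h2.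
apply/negP => euv'.
have gu := tree_geo geo ppu unu; have gv := tree_geo geo ppv unv.
have [Au [Bu [dpu lAu]]] := split_mem mu.
have [Av [Bv [dpv lAv]]] := split_mem mv.
subst pu pv.
have szA : forall A B w, geodesic e r (A ++ B) -> last r A = w -> dist_is e r w n -> size A = n.
  move=> A B w gAB lA [[p [wp [lp sp]]] dw].
  have gA := geo_prefix gAB.
  have k1 : n <= size A by apply: dw => //; case: gA.
  have k2 : size A <= n by rewrite -sp; apply: gA.2 => //; rewrite lp lA.
  by apply/eqP; rewrite eqn_leq k1 k2.
have sAu := szA _ _ _ gu lAu du; have sAv := szA _ _ _ gv lAv dv.
rewrite last_cat lAu in lpu; rewrite last_cat lAv in lpv.
case: (leqP (size Bu) (size Bv)) => hs.
  exact: (core geo nuv euv du dv gu lAu lpu gv lAv lpv sAu sAv hs euv' h1).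
have [sym _] := sg.
apply: (core geo (u:=v) (v:=u) _ _ dv du gv lAv lpv gu lAu lpu sAv sAu (ltnW hs)).
- by rewrite eq_sym.
- by rewrite sym.
- by rewrite sym.
- by case=> a b; apply: h1.
Qed.
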